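(* Let $c>1$ be an irrational number, let $q=[c]$ (so $q=c-\{c\}$), and let $d=\{c\}^{-1}$. For a positive integer $n$ let $c'_n=[c^{-1}n]$, and define $$f(n)=[c^{-1}(n+1)]-[c^{-1}n],\qquad g(n)=[\{c\}(n+1)]-[\{c\}n].$$ Let $k$ be a nonnegative integer. For a positive integer $m$ put $x=[mc]$. Then, as $m\to\infty$, \begin{align*} \sum_{n=1}^x \frac{q f(n)+f(n)g([ \frac {n}{c}]+k+1)}{n} =\;& 1+ \log m +\log c+ \gamma +\left\{\{c\}(k+1)\right\} \\ &- \sum_{n=1}^\infty \frac{c\{ c^{-1} (n+1)\}+\{ \{c\}(c'_{n+1}+k+1)\}}{n(n+1)}+O\left(\frac{1}{m}\right), \end{align*} where $\gamma$ is Euler's constant.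
   Context: $[x]$ is the greatest integer not exceeding $x$ and $\{x\}=x-[x]$. The function $f$ is the indicator function of the set $\{[cj]: j\ge 1\}$, and $g$ is the indicator function of $\{[dj]: j\ge1\}$. The implied constant in $O(1/m)$ may depend on $c$ and $k$. *)

(* Defs.v *)
From Stdlib Require Import Reals Lra Lia ZArith.
From Coquelicot Require Import Coquelicot.
Open Scope R_scope.

(* [x] : the greatest integer not exceeding x (Stdlib's Int_part is floor). *)
Definition fl (x : R) : R := IZR (Int_part x).
Definition fr (x : R) : R := x - fl x.

Definition irrational (c : R) : Prop :=
  ~ exists (p q : Z), q <> 0%Z /\ c = IZR p / IZR q.

Definition euler_gamma : R :=
  real (Lim_seq (fun N => sum_n_m (fun j => / INR j) 1 N - ln (INR N))).

Definition fB (c : R) (n : R) : R := fl (/ c * (n + 1)) - fl (/ c * n).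
Definition gB (c : R) (n : R) : R := fl (fr c * (n + 1)) - fl (fr c * n).

Definition lhs (c : R) (k m : nat) : R :=
  sum_n_m (fun n : nat =>
     (fl c * fB c (INR n) + fB c (INR n) * gB c (fl (INR n / c) + INR k + 1))
     / INR n)
    1 (Z.to_nat (Int_part (INR m * c))).

(* the series sum_{n>=1} (c {c^{-1}(n+1)} + {{c}(c'_{n+1}+k+1)}) / (n(n+1)),
   with c'_j = [c^{-1} j]; indexed from n = 1 (term at n = 0 set to 0). *)
Definition series_term (c : R) (k : nat) (n : nat) : R :=
  match n with
  | O => 0
  | S _ => (c * fr (/ c * (INR n + 1)) + fr (fr c * (fl (/ c * (INR n + 1)) + INR k + 1)))
           / (INR n * (INR n + 1))
  end.

Definition rhs_main (c : R) (k m : nat) : R :=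
  1 + ln (INR m) + ln c + euler_gamma + fr (fr c * (INR k + 1))
  - Series (series_term c k).

(* Main.v *)
Require Import Defs.
From Stdlib Require Import Reals Lra Lia ZArith.
From Coquelicot Require Import Coquelicot.
Open Scope R_scope.

Lemma fl_spec x : fl x <= x < fl x + 1.
Proof. unfold fl. destruct (base_Int_part x). lra. Qed.

Lemma fr_bounds x : 0 <= fr x < 1.
Proof. unfold fr. destruct (fl_spec x). lra. Qed.

Lemma fl_small x : 0 <= x < 1 -> fl x = 0.
Proof.
  intros H. unfold fl. destruct (base_Int_part x) as [H1 H2].
  assert (A: (Int_part x < 1)%Z) by (apply lt_IZR; lra).
  assert (B: (-1 < Int_part x)%Z) by (apply lt_IZR; lra).
  replace (Int_part x) with 0%Z by lia. reflexivity.
Qed.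

Lemma fl_step u v : v <= u < v + 1 -> fl u = fl v \/ fl u = fl v + 1.
Proof.
  intros H. unfold fl. destruct (base_Int_part u) as [H1 H2].
  destruct (base_Int_part v) as [H3 H4].
  assert (A: (Int_part u - Int_part v < 2)%Z) by (apply lt_IZR; rewrite minus_IZR; lra).
  assert (B: (-1 < Int_part u - Int_part v)%Z) by (apply lt_IZR; rewrite minus_IZR; lra).
  destruct (Z.eq_dec (Int_part u) (Int_part v)) as [e|e].
  - left; rewrite e; reflexivity.
  - right. replace (Int_part u) with (Int_part v + 1)%Z by lia.
    rewrite plus_IZR. reflexivity.
Qed.

Section S.
Variable c : R.
Variable k : nat.
Hypothesis Hc1 : 1 < c.

Definition E (t : R) : R :=
  c * fr (/ c * (t + 1)) + fr (fr c * (fl (/ c * (t + 1)) + INR k + 1)).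

Definition F : nat -> R := fun n : nat =>
     (fl c * fB c (INR n) + fB c (INR n) * gB c (fl (INR n / c) + INR k + 1))
     / INR n.

Lemma invc_lt1 : 0 < / c < 1.
Proof.
  assert (h: c * / c = 1) by (field; lra).
  assert (0 < / c) by (apply Rinv_0_lt_compat; lra). nra.
Qed.

Lemma E_bounds t : 0 <= E t <= c + 1.
Proof.
  unfold E. destruct (fr_bounds (/ c * (t + 1))).
  destruct (fr_bounds (fr c * (fl (/ c * (t + 1)) + INR k + 1))). nra.
Qed.

Lemma F_eq p : F (S p) = (1 - E (INR (S p)) + E (INR p)) / INR (S p).
Proof.
  unfold F, E, fB, gB.
  assert (Hn : 0 < INR (S p)) by (apply lt_0_INR; lia).
  replace (INR p + 1) with (INR (S p)) by (rewrite S_INR; ring).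
  replace (INR (S p) / c) with (/ c * INR (S p)) by (unfold Rdiv; ring).
  set (n := INR (S p)) in *.
  destruct invc_lt1.
  destruct (fl_step (/ c * (n + 1)) (/ c * n)) as [e|e].
  { split; nra. }
  - unfold fr. rewrite e. field. lra.
  - unfold fr. rewrite e. replace (fl (/ c * n) + 1 + INR k + 1) with (fl (/ c * n) + INR k + 1 + 1) by ring.
    unfold fr. field. lra.
Qed.

Lemma E0 : E 0 = 1 + fr (fr c * (INR k + 1)).
Proof.
  unfold E. rewrite Rplus_0_l, Rmult_1_r. destruct invc_lt1.
  rewrite (fl_small (/ c)) by lra.
  unfold fr at 1. rewrite (fl_small (/ c)) by lra.
  rewrite Rplus_0_l. field. lra.
Qed.

Lemma st_eq p : series_term c k (S p) = E (INR (S p)) / (INR (S p) * (INR (S p) + 1)).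
Proof. reflexivity. Qed.

Lemma main_identity p :
  sum_n_m F 1 (S p) = 1 + fr (fr c * (INR k + 1)) + sum_n_m (fun j => / INR j) 1 (S p)
     - E (INR (S p)) / INR (S p) - sum_n (series_term c k) p.
Proof.
  induction p.
  - rewrite !sum_n_n, sum_O. rewrite F_eq. simpl (series_term c k 0).
    replace (INR 0) with 0 by reflexivity. rewrite E0.
    replace (INR 1) with 1 by reflexivity.
    match goal with |- @eq _ ?a ?b => change (@eq R a b) end. field.
  - rewrite !(sum_n_Sm _ 1 (S p)) by lia. rewrite sum_Sn.
    rewrite F_eq, st_eq.
    assert (Hn : 0 < INR (S p)) by (apply lt_0_INR; lia).
    replace (INR (S (S p))) with (INR (S p) + 1) by (rewrite (S_INR (S p)); ring).
    rewrite IHp.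
    set (x := INR (S p)) in *. set (K := fr (fr c * (INR k + 1))).
    set (A := sum_n_m (fun j : nat => / INR j) 1 (S p)).
    set (B := sum_n (series_term c k) p).
    unfold plus; simpl.
    field. lra.
Qed.

End S.

Lemma lim_bound (u : nat -> R) (N0 : nat) lo hi :
  (forall n, lo <= u (n + N0)%nat <= hi) -> lo <= real (Lim_seq u) <= hi.
Proof.
  intros H. rewrite <- (Lim_seq_incr_n u N0).
  assert (h1 := Lim_seq_le_loc (fun _ => lo) (fun n => u (n + N0)%nat)).
  assert (h2 := Lim_seq_le_loc (fun n => u (n + N0)%nat) (fun _ => hi)).
  rewrite Lim_seq_const in h1, h2.
  assert (e : eventually (fun n => lo <= u (n + N0)%nat)) by (exists 0%nat; intros; apply H).
  assert (e2 : eventually (fun n => u (n + N0)%nat <= hi)) by (exists 0%nat; intros; apply H).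
  specialize (h1 e). specialize (h2 e2).
  destruct (Lim_seq (fun n => u (n + N0)%nat)); simpl in *; try contradiction; lra.
Qed.

Lemma ln_le_sub1 y : 0 < y -> ln y <= y - 1.
Proof.
  intros Hy. rewrite <- (ln_exp (y - 1)). apply ln_le; [lra|].
  generalize (exp_ineq1_le (y - 1)). lra.
Qed.

Lemma ln_step n : 1 <= n -> 0 <= ln (n + 1) - ln n - / (n + 1) <= / n - / (n + 1).
Proof.
  intros Hn.
  assert (a1 := ln_le_sub1 ((n + 1) / n)). assert (a2 := ln_le_sub1 (n / (n + 1))).
  rewrite ln_div in a1, a2 by lra.
  assert (e1 : (n + 1) / n - 1 = / n) by (field; lra).
  assert (e2 : n / (n + 1) - 1 = - / (n + 1)) by (field; lra).
  assert (0 < (n+1)/n) by (apply Rdiv_lt_0_compat; lra).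
  assert (0 < n/(n+1)) by (apply Rdiv_lt_0_compat; lra).
  split; [ | ]; lra.
Qed.

Definition harm (N : nat) : R := sum_n_m (fun j => / INR j) 1 N - ln (INR N).

Lemma harm_tail p j : harm (S p) - (/ INR (S p) - / INR (j + S p)) <= harm (j + S p) <= harm (S p).
Proof.
  induction j.
  - simpl. lra.
  - assert (Hn : 1 <= INR (j + S p)) by (apply (le_INR 1); lia).
    destruct (ln_step _ Hn) as [h1 h2].
    assert (e : harm (S j + S p) = harm (j + S p) - (ln (INR (j + S p) + 1) - ln (INR (j + S p)) - / (INR (j + S p) + 1))).
    { unfold harm. simpl (S j + S p)%nat. rewrite sum_n_Sm by lia.
      rewrite (S_INR (j + S p)). set (y := INR (j + S p)).
      set (A := sum_n_m (fun j0 : nat => / INR j0) 1 (j + S p)).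
      unfold plus; simpl. ring. }
    rewrite e. replace (INR (S j + S p)) with (INR (j + S p) + 1) by (rewrite <- S_INR; reflexivity).
    lra.
Qed.

Lemma gamma_bound p : harm (S p) - / INR (S p) <= euler_gamma <= harm (S p).
Proof.
  unfold euler_gamma. fold harm.
  apply (lim_bound harm (S p)). intros n.
  destruct (harm_tail p n).
  assert (0 < / INR (n + S p)) by (apply Rinv_0_lt_compat, lt_0_INR; lia). lra.
Qed.

Lemma series_tail c k (Hc1 : 1 < c) p j :
  sum_n (series_term c k) p <= sum_n (series_term c k) (j + p)
  <= sum_n (series_term c k) p + (c + 1) * (/ INR (S p) - / INR (S (j + p))).
Proof.
  induction j.
  - simpl. lra.
  - replace (S j + p)%nat with (S (j + p)) by lia.
    rewrite sum_Sn, st_eq.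
    assert (Hn : 0 < INR (S (j + p))) by (apply lt_0_INR; lia).
    destruct (E_bounds c k Hc1 (INR (S (j + p)))) as [e1 e2].
    replace (INR (S (S (j + p)))) with (INR (S (j + p)) + 1) by (rewrite (S_INR (S (j+p))); ring).
    set (x := INR (S (j + p))) in *. set (y := E c k x) in *.
    set (A := sum_n (series_term c k) (j + p)) in *.
    set (ip := INR (S p)) in *. set (B := sum_n (series_term c k) p) in *.
    unfold plus; simpl.
    assert (h1 : y / (x * (x + 1)) = y * (/ x - / (x + 1))) by (field; lra).
    assert (h2 : 0 <= / x - / (x + 1)).
    { assert (/ (x+1) <= / x) by (apply Rinv_le_contravar; lra). lra. }
    assert (h3 : y * (/ x - / (x + 1)) <= (c + 1) * (/ x - / (x + 1))) by (apply Rmult_le_compat_r; lra).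
    assert (h4 : 0 <= y * (/ x - / (x + 1))) by (apply Rmult_le_pos; lra).
    rewrite h1. split; lra.
Qed.

Lemma series_bound c k (Hc1 : 1 < c) p :
  sum_n (series_term c k) p <= Series (series_term c k)
  <= sum_n (series_term c k) p + (c + 1) * / INR (S p).
Proof.
  unfold Series. apply (lim_bound _ p). intros n.
  destruct (series_tail c k Hc1 p n).
  assert (0 < / INR (S (n + p))) by (apply Rinv_0_lt_compat, lt_0_INR; lia).
  split; nra.
Qed.

Theorem theorem2 (c : R) (k : nat) (Hc1 : 1 < c) (Hirr : irrational c) :
  exists (C : R) (M : nat), 0 < C /\
    forall m : nat, (M <= m)%nat -> (1 <= m)%nat ->
      Rabs (lhs c k m - rhs_main c k m) <= C / INR m.
Proof.
  exists (c + 2), 1%nat. split; [lra|]. intros m _ Hm.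
  assert (Hmr : 1 <= INR m) by (apply (le_INR 1); lia).
  set (z := Int_part (INR m * c)).
  destruct (base_Int_part (INR m * c)) as [hz1 hz2]. fold z in hz1, hz2.
  assert (hzm : (Z.of_nat m <= z)%Z).
  { assert (IZR (Z.of_nat m) - 1 < IZR z) by (rewrite <- INR_IZR_INZ; nra).
    assert (h : (Z.of_nat m - 1 < z)%Z) by (apply lt_IZR; rewrite minus_IZR; lra). lia. }
  assert (Hx : INR (Z.to_nat z) = IZR z).
  { rewrite INR_IZR_INZ, Z2Nat.id by lia. reflexivity. }
  assert (Hxm : (m <= Z.to_nat z)%nat) by lia.
  change (lhs c k m) with (sum_n_m (F c k) 1 (Z.to_nat z)).
  destruct (Z.to_nat z) as [|p] eqn:Ez; [lia|].
  rewrite main_identity by exact Hc1.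
  unfold rhs_main.
  destruct (gamma_bound p) as [g1 g2].
  destruct (series_bound c k Hc1 p) as [s1 s2].
  destruct (E_bounds c k Hc1 (INR (S p))) as [e1 e2].
  set (xr := INR (S p)) in *. set (mr := INR m) in *.
  assert (Hxr : mr <= xr) by (unfold xr, mr; apply le_INR; lia).
  assert (hxz : xr = IZR z) by exact Hx.
  assert (ix_le : / xr <= / mr) by (apply Rinv_le_contravar; lra).
  assert (ix_pos : 0 < / xr) by (apply Rinv_0_lt_compat; lra).
  assert (Hlnm : ln mr + ln c = ln (mr * c)) by (rewrite ln_mult; lra).
  assert (Hl1 : ln xr <= ln (mr * c)) by (apply ln_le; lra).
  assert (Hl2 : ln (mr * c) - ln xr <= / xr).
  { assert (h := ln_le_sub1 (mr * c / xr)). rewrite ln_div in h by nra.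
    assert (e : mr * c / xr - 1 = (mr * c - xr) * / xr) by (field; lra).
    assert (0 < mr * c / xr) by (apply Rdiv_lt_0_compat; nra).
    assert ((mr * c - xr) * / xr <= 1 * / xr) by (apply Rmult_le_compat_r; lra).
    lra. }
  unfold harm in g1, g2.
  replace (INR (S p)) with xr in g1, g2 by reflexivity.
  assert (hE : E c k xr / xr <= (c + 1) * / xr) by (unfold Rdiv; apply Rmult_le_compat_r; lra).
  assert (hE0 : 0 <= E c k xr / xr) by (unfold Rdiv; apply Rmult_le_pos; lra).
  assert (hC : (c + 2) * / xr <= (c + 2) * / mr) by (apply Rmult_le_compat_l; lra).
  unfold Rdiv at 2. apply Rabs_le. split; nra.
Qed.
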